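(* For every instance, the algorithm GC described in the context, given the pseudometric $d$, outputs (for any tie-breaking) a clustering that is $5$-FJR with respect to the centroid loss $\ell_i(C,x)=d(i,x)$.
   Context: Instance: finite nonempty set $\mathcal{N}$ of $n$ agents, finite nonempty set $\mathcal{M}$ of feasible centers, positive integer $k$, pseudometric $d$ on $\mathcal{N}\cup\mathcal{M}$. A clustering is $\mathcal{X}=\{(C_1,x_1),\dots,(C_k,x_k)\}$ with $C_t$ pairwise disjoint (some possibly empty), union $\mathcal{N}$, $x_t\in\mathcal{M}$; $\ell_i(\mathcal{X})=\ell_i(C_t,x_t)$ where $i\in C_t$. For $\alpha\ge1$, $\mathcal{X}$ is $\alpha$-FJR (with respect to losses $\ell_i$) if there is no $S\subseteq\mathcal{N}$ with $|S|\ge n/k$ and $y\in\mathcal{M}$ with $\alpha\,\ell_i(S,y)<\min_{j\in S}\ell_j(\mathcal{X})$ for all $i\in S$. Algorithm GC: maintain a set $U$ of uncaptured agents (initially $\mathcal{N}$) and a parameter $\delta$ increasing continuously from $0$. Whenever there exist an agent $i\in U$ and a set $C\subseteq U$ with $|C|\ge\min(|U|,n/k)$ and $d(i,i')\le\delta$ for all $i'\in C$, form the cluster $(C,x)$ with $x\in\arg\min_{x'\in\mathcal{M}}d(i,x')$ and set $U\leftarrow U\setminus C$. Stop when $U=\emptyset$; output the formed clusters (padded with empty clusters to $k$). *)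

(* Defs.v *)
From HB Require Import structures.
From mathcomp Require Import all_boot all_order all_algebra.
Set Implicit Arguments. Unset Strict Implicit. Unset Printing Implicit Defensive.
Import Order.TTheory GRing.Theory Num.Theory.
Local Open Scope ring_scope.

Section GCDefs.
Variables (R : realFieldType) (N M : finType).

Definition pseudometric (d : N + M -> N + M -> R) : Prop :=
  [/\ forall x, d x x = 0,
      forall x y, d x y = d y x &
      forall x y z, d x z <= d x y + d y z].

Variable d : N + M -> N + M -> R.
Variable k : nat.

Definition nk : R := (#|N|%:R) / (k%:R).

Definition gc_feasible (U : {set N}) (delta : R) (i : N) (C : {set N}) : Prop :=
  [/\ i \in U, C \subset U,
      Num.min (#|U|%:R) nk <= (#|C|%:R : R) &
      forall i', i' \in C -> d (inl i) (inl i') <= delta].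

Definition gc_some_feasible (U : {set N}) (delta : R) : Prop :=
  exists i C, gc_feasible U delta i C.

(* gc_run U delta out : starting from uncaptured set U and current parameter
   value delta, some execution of GC (with arbitrary tie-breaking) outputs the
   list of clusters [out] (in order of formation). The parameter increases
   continuously from delta; the next cluster is formed at the first value
   delta' >= delta at which the condition holds. *)
Inductive gc_run : {set N} -> R -> seq ({set N} * M) -> Prop :=
| gc_done delta : gc_run set0 delta [::]
| gc_step U delta delta' i C x out :
    U != set0 ->
    delta <= delta' ->
    (forall delta'', delta <= delta'' -> delta'' < delta' ->
        ~ gc_some_feasible U delta'') ->
    gc_feasible U delta' i C ->
    (forall x', d (inl i) (inr x) <= d (inl i) (inr x')) ->
    gc_run (U :\: C) delta' out ->
    gc_run U delta ((C, x) :: out).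

(* The clusters (padded with empty clusters to k) form a clustering:
   at most k clusters, pairwise disjoint, covering N. *)
Definition is_clustering (out : seq ({set N} * M)) : Prop :=
  [/\ (size out <= k)%N,
      (forall a b, (a < size out)%N -> (b < size out)%N -> a <> b ->
         [disjoint nth set0 (unzip1 out) a & nth set0 (unzip1 out) b])
      & forall i : N, exists2 p, p \in out & i \in p.1].

(* Centroid loss of agent i under the clustering: d(i, x_t) where i ∈ C_t
   (clusters are disjoint, so the first matching cluster is the one). *)
Definition centroid_loss (out : seq ({set N} * M)) (i : N) : R :=
  head 0 [seq d (inl i) (inr p.2) | p <- filter (fun q : {set N} * M => i \in q.1) out].

Definition is_FJR (alpha : R) (out : seq ({set N} * M)) : Prop :=
  ~ exists (S : {set N}) (y : M),
      nk <= (#|S|%:R : R) /\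
      (forall i, i \in S -> forall j, j \in S ->
         alpha * d (inl i) (inr y) < centroid_loss out j).
End GCDefs.

(* Main.v *)
Require Import Defs.
From HB Require Import structures.
From mathcomp Require Import all_boot all_order all_algebra.
From mathcomp Require Import lra.
Import Order.TTheory GRing.Theory Num.Theory.
Local Open Scope ring_scope.
Set Implicit Arguments. Unset Strict Implicit.

Section Aux.
Variables (R : realFieldType) (N M : finType).
Variable d : N + M -> N + M -> R.
Variable k : nat.

Lemma seq_max (T : eqType) (f : T -> R) (s : seq T) x0 :
  x0 \in s -> exists2 i, i \in s & forall j, j \in s -> f j <= f i.
Proof.
elim: s x0 => [//|a s IH] x0 _.
case: (boolP (x0 \in s)) => [/IH [i Hi Hm]|_].
  case: (leP (f a) (f i)) => H.
  - exists i; first by rewrite inE Hi orbT.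
    by move=> j; rewrite inE => /orP [/eqP->|/Hm].
  - exists a; first by rewrite inE eqxx.
    move=> j; rewrite inE => /orP [/eqP->//|/Hm Hj].
    by apply: le_trans Hj (ltW H).
have : s = [::] \/ exists b, b \in s by case: (s) => [|b t]; [left|right; exists b; rewrite inE eqxx].
case=> [->|[b Hb]].
  by exists a; rewrite ?inE ?eqxx // => j; rewrite inE => /eqP->.
have [i Hi Hm] := IH b Hb.
case: (leP (f a) (f i)) => H.
- exists i; first by rewrite inE Hi orbT.
  by move=> j; rewrite inE => /orP [/eqP->|/Hm].
- exists a; first by rewrite inE eqxx.
  move=> j; rewrite inE => /orP [/eqP->//|/Hm Hj].
  by apply: le_trans Hj (ltW H).
Qed.

Lemma loss_cons C x out j :
  centroid_loss d ((C, x) :: out) j =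
  if j \in C then d (inl j) (inr x) else centroid_loss d out j.
Proof. by rewrite /centroid_loss /=; case: ifP. Qed.

Lemma run_set0 U delta out : gc_run d k U delta out -> U = set0 -> out = [::].
Proof. by case=> // U0 ? ? ? ? ? ? /eqP H *; subst. Qed.

Lemma run_cover U delta out : gc_run d k U delta out ->
  forall i, i \in U -> exists2 p, p \in out & i \in p.1.
Proof.
elim=> [delta0 i|U0 de de' i0 C x out' _ _ _ _ _ _ IH i Hi]; first by rewrite inE.
case: (boolP (i \in C)) => HC.
  by exists (C, x); rewrite ?inE ?eqxx.
have Hi' : i \in U0 :\: C by rewrite inE HC Hi.
have [p Hp Hip] := IH i Hi'.
by exists p; rewrite // inE Hp orbT.
Qed.

Lemma run_sub U delta out : gc_run d k U delta out ->
  forall a, (a < size out)%N -> nth set0 (unzip1 out) a \subset U.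
Proof.
elim=> [//|U0 de de' i0 C x out' _ _ _ [_ HCU _ _] _ _ IH [|a] /= Ha //].
by apply: subset_trans (IH a Ha) (subsetDl _ _).
Qed.

Lemma run_disj U delta out : gc_run d k U delta out ->
  forall a b, (a < size out)%N -> (b < size out)%N -> a <> b ->
    [disjoint nth set0 (unzip1 out) a & nth set0 (unzip1 out) b].
Proof.
elim=> [//|U0 de de' i0 C x out' _ _ _ [_ HCU _ _] _ Hrun IH].
have dC : forall b, (b < size out')%N ->
    [disjoint C & nth set0 (unzip1 out') b].
  move=> b Hb; have H := run_sub Hrun Hb.
  rewrite disjoint_sym disjoints_subset; apply: subset_trans H _.
  by apply/subsetP => z; rewrite !inE => /andP[->].
move=> [|a] [|b] /= Ha Hb Hab //.
- exact: dC.
- by rewrite disjoint_sym; apply: dC.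
- by apply: IH => // E; apply: Hab; rewrite E.
Qed.

Lemma run_size U delta out : gc_run d k U delta out ->
  U != set0 -> ((size out).-1)%:R * nk R N k < (#|U|%:R : R).
Proof.
elim=> [delta0|U0 de de' i0 C x out' U0n _ _ [Hi HCU Hmin _] _ Hrun IH];
  first by rewrite eqxx.
move=> _.
case: (boolP (U0 :\: C == set0)) => HE.
  by rewrite (run_set0 Hrun (eqP HE)) /= mul0r ltr0n card_gt0.
have H1 := IH HE.
have HCk : nk R N k <= (#|C|%:R : R).
  move: Hmin; rewrite /Num.min; case: ifP => // _ HU.
  have : (#|U0| <= #|C|)%N by rewrite -(ler_nat R).
  move=> HUC; have HCe : C = U0 by apply/eqP; rewrite eqEcard HCU HUC.
  by move: HE; rewrite HCe setDv eqxx.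
have HU0 : #|U0| = (#|U0 :\: C| + #|C|)%N.
  by rewrite cardsDS // subnK // subset_leq_card.
rewrite /= HU0 natrD.
move: H1; case: (size out') => [|s] /= H1.
  by move: H1; rewrite !mul0r => H1; have := ler0n R #|C|; lra.
by rewrite -natr1 mulrDl mul1r; apply: ltr_leD.
Qed.

Hypothesis pd : pseudometric d.

Lemma d_ge0 x y : 0 <= d x y.
Proof.
case: pd => H0 Hs Ht.
have := Ht x y x; rewrite H0 (Hs y x); lra.
Qed.

Lemma run_fjr U delta out : gc_run d k U delta out ->
  forall (S : {set N}) (y : M) (r : R) s0,
    s0 \in S -> S \subset U -> nk R N k <= (#|S|%:R : R) -> delta <= 2 * r ->
    (forall i, i \in S -> d (inl i) (inr y) <= r) ->
    exists2 j, j \in S & centroid_loss d out j <= 5 * r.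
Proof.
elim=> [delta0|U0 de de' a C x out' U0n Hde Hnf [Ha HCU Hmin HCd] Hx Hrun IH]
  S y r s0 Hs0 HSU HSk Hdr Hr.
  by move: HSU; rewrite subset0 => /eqP HS; move: Hs0; rewrite HS inE.
case: pd => H0 Hs Ht.
have Hdist : forall i j, i \in S -> j \in S -> d (inl i) (inl j) <= 2 * r.
  move=> i j Hi Hj; apply: le_trans (Ht _ (inr y) _) _.
  by rewrite (Hs (inr y)); have := Hr i Hi; have := Hr j Hj; lra.
have Hd' : de' <= 2 * r.
  rewrite leNgt; apply/negP => Hlt.
  apply: (Hnf (2 * r) Hdr Hlt).
  exists s0, S; split => //; first by move/subsetP: HSU; apply.
  + by apply: le_trans HSk; rewrite ge_min lexx orbT.
  + by move=> i' Hi'; apply: Hdist.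
case: (boolP [exists j in S, j \in C]).
  case/exists_inP => j HjS HjC; exists j => //.
  rewrite loss_cons HjC.
  have Haj : d (inl a) (inl j) <= 2 * r by apply: le_trans (HCd _ HjC) Hd'.
  apply: le_trans (Ht _ (inl a) _) _.
  apply: le_trans (lerD (lexx _) (Hx y)) _.
  apply: le_trans (lerD (lexx _) (Ht _ (inl j) _)) _.
  rewrite (Hs (inl j)).
  have := Hr j HjS; lra.
move/exists_inPn => Hno.
have HSU' : S \subset U0 :\: C.
  apply/subsetP => i Hi; rewrite inE Hno //.
  by move/subsetP: HSU; apply.
have [j Hj Hl] := IH S y r s0 Hs0 HSU' HSk Hd' Hr.
by exists j => //; rewrite loss_cons (negbTE (Hno j Hj)).
Qed.

End Aux.

Theorem mainTheorem14 (R : realFieldType) (N M : finType)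
    (d : N + M -> N + M -> R) (k : nat) :
  (0 < #|N|)%N -> (0 < #|M|)%N -> (0 < k)%N ->
  pseudometric d ->
  forall out : seq ({set N} * M),
    gc_run d k [set: N] 0 out ->
    is_clustering k out /\ is_FJR d k 5 out.
Proof.
move=> Hn _ Hk pd out Hrun.
have Hnk : 0 < nk R N k by rewrite /nk divr_gt0 // ltr0n.
split.
  split.
  - have HN : [set: N] != set0 by rewrite -card_gt0 cardsT.
    have := run_size Hrun HN; rewrite cardsT.
    rewrite leqNgt; apply: contraTN => Hs.
    rewrite -leNgt.
    have Hk' : (k <= (size out).-1)%N by move: Hs; case: (size out).
    apply: le_trans (ler_wpM2r (ltW Hnk) (_ : k%:R <= _)) ; last by rewrite ler_nat.
    rewrite /nk mulrC divfK // pnatr_eq0 -lt0n //.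
  - exact: run_disj Hrun.
  - by move=> i; apply: (run_cover Hrun); rewrite inE.
case=> S [y [HSk HS]].
have HS0 : (0 < #|S|)%N by rewrite -(ltr_nat R); apply: lt_le_trans HSk.
have [s0 Hs0] : exists s0, s0 \in S by apply/set0Pn; rewrite -card_gt0.
have Hs0' : s0 \in enum S by rewrite mem_enum.
have [m Hm Hmax] := seq_max (fun i => d (inl i) (inr y)) Hs0'.
rewrite mem_enum in Hm.
have Hr : forall i, i \in S -> d (inl i) (inr y) <= d (inl m) (inr y).
  by move=> i Hi; apply: Hmax; rewrite mem_enum.
have H2r : 0 <= 2 * d (inl m) (inr y) by have := d_ge0 pd (inl m) (inr y); lra.
have [j Hj Hl] := run_fjr pd Hrun Hs0 (subsetT S) HSk H2r Hr.
have := HS m Hm j Hj; lra.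
Qed.
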